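(* Let $v,w\in\mathbb{R}^n$ be such that $v$ has at least one positive entry and at least one negative entry, and $w\neq 0$. Then there exists an invertible matrix $B\in\mathbb{R}^{n\times n}$ with $B\geq 0$ (entrywise) such that $Bv=w$.
   Context: For a matrix or vector, $\geq 0$ means all entries are nonnegative. *)

(* Defs.v *)
From HB Require Import structures.
From mathcomp Require Import all_boot all_order all_algebra.
Set Implicit Arguments. Unset Strict Implicit. Unset Printing Implicit Defensive.

(* Main.v *)
Require Import Defs.
From HB Require Import structures.
From mathcomp Require Import all_boot all_order all_algebra perm fingroup.
From mathcomp Require Import ring lra.
Import Order.TTheory GRing.Theory Num.Theory.
Local Open Scope ring_scope.

Lemma choose_t (R : realFieldType) (u1 u2 : R) : (u1 != 0) || (u2 != 0) ->
  exists t1 t2 : R, [/\ `|u1| <= t1, `|u2| <= t2 & u1 * t2 - u2 * t1 != 0].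
Proof.
move=> hu.
have T0 : 0 < `|u1| + `|u2|.
  case/orP: hu => h.
    by apply: ltr_wpDr => //; rewrite normr_gt0.
  by apply: ltr_wpDl => //; rewrite normr_gt0.
set T := `|u1| + `|u2|.
have h1 : `|u1| <= T by rewrite /T lerDl.
have h2 : `|u2| <= T by rewrite /T lerDr.
have [e|ne] := eqVneq (2 * u1 - u2) 0.
  exists (2 * T), T; split => //; first lra.
  have -> : u2 = 2 * u1 by lra.
  have : u1 != 0.
    case/orP: hu => // h; apply: contra h => /eqP h0.
    apply/eqP; lra.
  move=> nz; apply/eqP => h.
  have : u1 * T = 0 by lra.
  by move/eqP; rewrite mulf_eq0 (negPf nz) /= gt_eqF.
exists T, (2 * T); split => //; first lra.
apply/eqP => h; have : (2 * u1 - u2) * T = 0 by lra.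
by move/eqP; rewrite mulf_eq0 (negPf ne) /= gt_eqF.
Qed.
Lemma core (R : realFieldType) n (p q : 'I_n) (v w : 'cV[R]_n) :
  0 < v p 0 -> v q 0 < 0 -> (w p 0 != 0) || (w q 0 != 0) ->
  exists B : 'M[R]_n,
    [/\ B \in unitmx, (forall i j, 0 <= B i j) & B *m v = w].
Proof.
move=> vp vq hw.
have pq : p != q by apply/eqP => e; move: vq; rewrite -e; lra.
have [t1 [t2 [h1 h2 hD]]] := @choose_t _ _ _ hw.
pose a := v p 0; pose b := - v q 0.
have a0 : 0 < a by [].
have b0 : 0 < b by rewrite /b oppr_gt0.
pose r i := w i 0 - (if (i == p) || (i == q) then 0 else v i 0).
pose t i := if i == p then t1 else if i == q then t2 else `|r i|.
have rp : r p = w p 0 by rewrite /r eqxx /= subr0.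
have rq : r q = w q 0 by rewrite /r eqxx orbT /= subr0.
have tp : t p = t1 by rewrite /t eqxx.
have tq : t q = t2 by rewrite /t eqxx eq_sym (negPf pq).
have ht : forall i, `|r i| <= t i.
  move=> i; rewrite /t; case: eqP => [->|_]; first by rewrite rp.
  by case: eqP => [->|_]; [rewrite rq|].
pose B := \matrix_(i, j) (if j == p then (t i + r i) / a
          else if j == q then t i / b else (i == j)%:R : R).
exists B; split.
- rewrite unitmxE unitfE; apply/negP => /det0P [z nz zB].
  have qp : (q == p) = false by rewrite eq_sym (negPf pq).
  have col : forall j, (z *m B) 0 j = 0 by move=> j; rewrite zB mxE.
  have zj : forall j, j != p -> j != q -> z 0 j = 0.
    move=> j jp jq; have := col j; rewrite mxE (bigD1 j) //= mxE (negPf jp) (negPf jq) eqxx mulr1 big1 ?addr0 //.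
    by move=> i ij; rewrite mxE (negPf jp) (negPf jq) (negPf ij) mulr0.
  have cp := col p; have cq := col q.
  move: cp; rewrite mxE (bigD1 p) //= (bigD1 q) //=; last by rewrite eq_sym.
  rewrite big1 ?addr0; last first.
    by move=> i /andP[ip iq]; rewrite zj // mul0r.
  move=> cp.
  move: cq; rewrite mxE (bigD1 p) //= (bigD1 q) //=; last by rewrite eq_sym.
  rewrite big1 ?addr0; last first.
    by move=> i /andP[ip iq]; rewrite zj // mul0r.
  move=> cq.
  rewrite !mxE eqxx qp in cp cq.
  rewrite tp tq rp rq in cp cq.
  have an : a != 0 by rewrite gt_eqF.
  have bn : b != 0 by rewrite gt_eqF.
  set zp := z 0 p in cp cq; set zq := z 0 q in cp cq.
  set u1 := w p 0 in cp cq hD; set u2 := w q 0 in cp cq hD.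
  have E1 : zp * (t1 + u1) + zq * (t2 + u2) = 0.
    by move: (congr1 (fun x => x * a) cp); rewrite mul0r => <-; rewrite mulrDl -[zp * _ * _]mulrA -[zq * _ * _]mulrA !(divfK an).
  have E2 : zp * t1 + zq * t2 = 0.
    by move: (congr1 (fun x => x * b) cq); rewrite mul0r => <-; rewrite mulrDl -[zp * _ * _]mulrA -[zq * _ * _]mulrA !eqxx !(divfK bn).
  have Zp : zp = 0.
    have : zp * (u1 * t2 - u2 * t1) = 0.
      rewrite (_ : zp * _ = t2 * ((zp * (t1 + u1) + zq * (t2 + u2)) - (zp * t1 + zq * t2)) - u2 * (zp * t1 + zq * t2)); last by ring.
      by rewrite E1 E2; ring.
    by move/eqP; rewrite mulf_eq0 (negPf hD) orbF => /eqP.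
  have Zq : zq = 0.
    have : zq * (u1 * t2 - u2 * t1) = 0.
      rewrite (_ : zq * _ = u1 * (zp * t1 + zq * t2) - t1 * ((zp * (t1 + u1) + zq * (t2 + u2)) - (zp * t1 + zq * t2))); last by ring.
      by rewrite E1 E2; ring.
    by move/eqP; rewrite mulf_eq0 (negPf hD) orbF => /eqP.
  move/eqP: nz; apply; apply/matrixP => i j; rewrite ord1 mxE.
  have [->|jp] := eqVneq j p; first exact: Zp.
  have [->|jq] := eqVneq j q; first exact: Zq.
  exact: zj.
- move=> i j; rewrite mxE.
  have := ht i; have := ler_norm (r i); have := ler_norm (- r i); rewrite normrN => n1 n2 n3.
  case: ifP => _; first by apply: divr_ge0 => //; lra.
  case: ifP => _; first by apply: divr_ge0 => //; lra.
  by rewrite ler0n.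
- apply/matrixP => i k; rewrite ord1 !mxE.
  rewrite (bigD1 p) //= (bigD1 q) //=; last by rewrite eq_sym.
  have qp : (q == p) = false by rewrite eq_sym (negPf pq).
  rewrite !mxE eqxx qp eqxx.
  have rest : \sum_(j | (j != p) && (j != q)) B i j * v j 0
      = (if (i == p) || (i == q) then 0 else v i 0).
    rewrite (eq_bigr (fun j => (i == j)%:R * v j 0)); last first.
      by move=> j /andP[/negPf jp /negPf jq]; rewrite mxE jp jq.
    case: ifP => hi.
      apply: big1 => j /andP[jp jq].
      have ij : (i == j) = false.
        by case/orP: hi => /eqP ->; apply/negbTE; rewrite eq_sym.
      by rewrite ij mul0r.
    have hi' : (i != p) && (i != q) by rewrite -negb_or hi.
    rewrite (bigD1 i) //= eqxx mul1r big1 ?addr0 //.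
    by move=> j /andP[_ ji]; rewrite eq_sym (negPf ji) mul0r.
  rewrite rest.
  have -> : v q 0 = - b by rewrite /b opprK.
  rewrite -/a.
  have an : a != 0 by rewrite gt_eqF.
  have bn : b != 0 by rewrite gt_eqF.
  rewrite /r; field; by rewrite an andbT ?oppr_eq0 lt_eqF.
Qed.

Theorem mainTheorem2 (R : realFieldType) (n : nat) (v w : 'cV[R]_n)
  (hpos : exists i : 'I_n, 0 < v i 0)
  (hneg : exists i : 'I_n, v i 0 < 0)
  (hw : w != 0) :
  exists B : 'M[R]_n,
    [/\ B \in unitmx, (forall i j, 0 <= B i j) & B *m v = w].
Proof.
case: hpos => p vp; case: hneg => q vq.
have [h|h] := boolP ((w p 0 != 0) || (w q 0 != 0)); first exact: core vp vq h.
rewrite negb_or !negbK in h; case/andP: h => /eqP wp /eqP wq.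
have [k wk] : exists k, w k 0 != 0.
  case: (pickP (fun k => w k 0 != 0)) => [k hk|H]; first by exists k.
  move/eqP: hw; case; apply/matrixP => i j; rewrite ord1 mxE.
  by move: (H i) => /negbFE/eqP.
have kp : p != k by apply/eqP => e; move: wk; rewrite -e wp eqxx.
have kq : q != k by apply/eqP => e; move: wk; rewrite -e wq eqxx.
have pq : p != q by apply/eqP => e; move: vq; rewrite -e; lra.
pose s := tperm p k.
pose v' := row_perm s v.
have v'k : v' k 0 = v p 0 by rewrite mxE /s tpermR.
have v'q : v' q 0 = v q 0 by rewrite mxE /s tpermD // eq_sym.
have h1 : 0 < v' k 0 by rewrite v'k.
have h2 : v' q 0 < 0 by rewrite v'q.
have h3 : (w k 0 != 0) || (w q 0 != 0) by rewrite wk.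
have [B' [u nn e]] := @core R n k q v' w h1 h2 h3.
exists (B' *m perm_mx s); split.
- by rewrite unitmx_mul u unitmx_perm.
- move=> i j; rewrite mxE; apply: sumr_ge0 => l _; apply: mulr_ge0 => //.
  by rewrite /perm_mx !mxE ler0n.
- by rewrite -mulmxA -row_permE.
Qed.
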